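(* The interaction-free subspace satisfies $W=\operatorname{ran}|Z|_1^\perp$, where $|Z|_1^\perp=P_1-Z_1^*Z_1$.
   Context: Fix integers $N\ge 2$ and $n_1\ge n_2\ge\dots\ge n_N\ge 1$. Let $\mathcal H$ be a finite-dimensional complex Hilbert space with orthonormal basis $\{|-\rangle,|+\rangle\}\cup\{|a_k\rangle:1\le k\le N,\ 0\le a\le n_k-1\}$. For vectors $x,y$, $|x\rangle\langle y|$ denotes the operator $u\mapsto\langle y,u\rangle x$. Put $E_k=\mathrm{span}\{|a_k\rangle:0\le a\le n_k-1\}$, $P_k$ the orthogonal projection onto $E_k$, $\zeta_k=e^{2\pi i/n_k}$, and $\varphi_{a_k}=n_k^{-1/2}\sum_{b=0}^{n_k-1}\zeta_k^{-ba}|b_k\rangle$. For $1\le k\le N-1$ let $Z_k=n_k^{-1/2}\sum_{b=0}^{n_{k+1}-1}\sum_{a=0}^{n_k-1}\zeta_k^{ba}|b_{k+1}\rangle\langle a_k|$ (an operator on $\mathcal H$). Let $\omega$ range over $\{\omega_+,\omega_-,\omega_1,\dots,\omega_{N-1}\}$ and let $\Gamma_{\pm,\omega}>0$ be constants. Kraus operators: $L_{-,\omega_+}=\sqrt{n_1\Gamma_{-,\omega_+}}|\varphi_{0_1}\rangle\langle +|$, $L_{+,\omega_+}=\sqrt{n_1\Gamma_{+,\omega_+}}|+\rangle\langle\varphi_{0_1}|$, $L_{-,\omega_k}=\sqrt{\Gamma_{-,\omega_k}}Z_k$, $L_{+,\omega_k}=\sqrt{\Gamma_{+,\omega_k}}Z_k^*$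 ($1\le k\le N-1$), $L_{-,\omega_-}=\sqrt{\Gamma_{-,\omega_-}}|-\rangle\langle\varphi_{0_N}|$, $L_{+,\omega_-}=0$. The interaction-free subspace is $W=\bigcap_{\omega}\bigcap_{\epsilon=\pm}(\ker L_{\epsilon,\omega}\cap\ker L_{\epsilon,\omega}^* )$. *)

(* Defs.v *)
From HB Require Import structures.
From mathcomp Require Import all_boot all_order all_algebra all_field.
Set Implicit Arguments. Unset Strict Implicit. Unset Printing Implicit Defensive.
Import Order.TTheory GRing.Theory Num.Theory.
Local Open Scope ring_scope.

(* Orthonormal basis of H: inl false = |->, inl true = |+>,
   inr (existT k a) = |a_(k+1)> with k : 'I_N (0-based) and a : 'I_(n (k+1)).
   The parameters n_k are given 1-based as n : nat -> nat. *)
Definition basis (N : nat) (n : nat -> nat) : finType :=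
  (bool + {k : 'I_N & 'I_(n k.+1)})%type.

Section Ops.
Variables (N : nat) (n : nat -> nat).
Local Notation B := (basis N n).

Definition vec := B -> algC.
Definition op := B -> B -> algC.

Definition opapply (A : op) (v : vec) : vec := fun x => \sum_(y : B) A x y * v y.
Definition opcomp (A C : op) : op := fun x z => \sum_(y : B) A x y * C y z.
Definition opadj (A : op) : op := fun x y => (A y x)^*.
Definition opsub (A C : op) : op := fun x y => A x y - C x y.
Definition opscale (c : algC) (A : op) : op := fun x y => c * A x y.
Definition op0 : op := fun _ _ => 0.
(* |x><y| : u |-> <y,u> x, with inner product antilinear in the first slot *)
Definition ketbra (x y : vec) : op := fun i j => x i * (y j)^*.
Definition vscale (c : algC) (v : vec) : vec := fun x => c * v x.
Definition vsum (I : seq nat) (f : nat -> vec) : vec :=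
  fun x => \sum_(i <- I) f i x.
Definition opsum (I : seq nat) (f : nat -> op) : op :=
  fun x y => \sum_(i <- I) f i x y.

Definition e_pm (s : bool) : vec := fun x => (x == inl s)%:R.
(* |a_k> (1-based k, meaningful for 1 <= k <= N, a < n_k) *)
Definition e_a (k a : nat) : vec := fun x =>
  match x with
  | inl _ => 0
  | inr s => (((tag s).+1 == k) && (val (tagged s) == a))%:R
  end.

(* zeta_n = e^{2 pi i / n}: n.-root (-1) is the n-th root of -1 of minimal
   nonnegative argument, i.e. e^{i pi / n}; its square is e^{2 pi i / n}. *)
Definition zeta (m : nat) : algC := (m.-root (-1)) ^+ 2.
Definition isqrt (m : nat) : algC := (sqrtC (m%:R))^-1.

Definition Pk (k : nat) : op := opsum (iota 0 (n k)) (fun a => ketbra (e_a k a) (e_a k a)).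

Definition phi (k a : nat) : vec :=
  vscale (isqrt (n k)) (vsum (iota 0 (n k)) (fun b => vscale (zeta (n k) ^- (b * a)) (e_a k b))).

Definition Zop (k : nat) : op :=
  opscale (isqrt (n k))
   (opsum (iota 0 (n k.+1)) (fun b =>
     opsum (iota 0 (n k)) (fun a =>
       opscale (zeta (n k) ^+ (b * a)) (ketbra (e_a k.+1 b) (e_a k a))))).

Inductive omega := om_plus | om_minus | om_k of nat.
Definition omega_valid (w : omega) : bool :=
  match w with om_k k => (1 <= k < N)%N | _ => true end.

(* Kraus operators L_{eps,omega}; eps : bool with true = '+', false = '-'.
   Gp e = Gamma_{e,omega_+}, Gm e = Gamma_{e,omega_-}, Gk e k = Gamma_{e,omega_k}. *)
Definition Kraus (Gp Gm : bool -> algC) (Gk : bool -> nat -> algC)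
  (e : bool) (w : omega) : op :=
  match w, e with
  | om_plus, false => opscale (sqrtC ((n 1)%:R * Gp false)) (ketbra (phi 1 0) (e_pm true))
  | om_plus, true => opscale (sqrtC ((n 1)%:R * Gp true)) (ketbra (e_pm true) (phi 1 0))
  | om_k k, false => opscale (sqrtC (Gk false k)) (Zop k)
  | om_k k, true => opscale (sqrtC (Gk true k)) (opadj (Zop k))
  | om_minus, false => opscale (sqrtC (Gm false)) (ketbra (e_pm false) (phi N 0))
  | om_minus, true => op0
  end.

Definition in_W (Gp Gm : bool -> algC) (Gk : bool -> nat -> algC) (v : vec) : Prop :=
  forall (e : bool) (w : omega), omega_valid w ->
    (forall x, opapply (Kraus Gp Gm Gk e w) v x = 0) /\
    (forall x, opapply (opadj (Kraus Gp Gm Gk e w)) v x = 0).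

Definition in_range (A : op) (v : vec) : Prop :=
  exists u : vec, forall x, v x = opapply A u x.

End Ops.

(* Main.v *)
Require Import Defs.
From mathcomp Require Import all_boot all_order all_algebra all_field.
From mathcomp Require Import ring lra zify.
Import Order.TTheory GRing.Theory Num.Theory.
Set Implicit Arguments. Unset Strict Implicit. Unset Printing Implicit Defensive.
Local Open Scope ring_scope.

Definition inner (N : nat) (n : nat -> nat) (q w : vec N n) : algC :=
  \sum_(y : basis N n) (q y)^* * w y.

Lemma apply_scale N n c (A : op N n) w x :
  opapply (opscale c A) w x = c * opapply A w x.
Proof. by rewrite /opapply /opscale mulr_sumr; apply: eq_bigr => y _; rewrite mulrA. Qed.

Lemma apply_adjscale N n c (A : op N n) w x :
  opapply (opadj (opscale c A)) w x = c^* * opapply (opadj A) w x.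
Proof.
by rewrite /opapply /opadj /opscale mulr_sumr; apply: eq_bigr => y _; rewrite rmorphM mulrA.
Qed.

Lemma apply_adjadj N n (A : op N n) w x :
  opapply (opadj (opadj A)) w x = opapply A w x.
Proof. by rewrite /opapply /opadj; apply: eq_bigr => y _; rewrite conjCK. Qed.

Lemma apply_ketbra N n (p q w : vec N n) x :
  opapply (ketbra p q) w x = p x * inner q w.
Proof. by rewrite /opapply /ketbra /inner mulr_sumr; apply: eq_bigr => y _; rewrite mulrA. Qed.

Lemma apply_adjketbra N n (p q w : vec N n) x :
  opapply (opadj (ketbra p q)) w x = q x * inner p w.
Proof.
rewrite /opapply /opadj /ketbra /inner /= mulr_sumr; apply: eq_bigr => y _.
by rewrite rmorphM /= conjCK mulrA (mulrC (p y)^*).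
Qed.

Lemma apply_sub N n (A C : op N n) w x :
  opapply (opsub A C) w x = opapply A w x - opapply C w x.
Proof. by rewrite /opapply /opsub -sumrB; apply: eq_bigr => y _; rewrite mulrBl. Qed.

Lemma apply_comp N n (A C : op N n) w x :
  opapply (opcomp A C) w x = opapply A (opapply C w) x.
Proof.
rewrite /opapply /opcomp.
under eq_bigr do rewrite mulr_suml.
rewrite exchange_big /=; apply: eq_bigr => y _.
by rewrite mulr_sumr; apply: eq_bigr => z _; rewrite mulrA.
Qed.

Lemma apply_0 N n (A : op N n) w x : (forall y, w y = 0) -> opapply A w x = 0.
Proof. by move=> h; rewrite /opapply big1 // => y _; rewrite h mulr0. Qed.

Lemma apply_op0 N n (w : vec N n) x : opapply (@op0 N n) w x = 0.
Proof. by rewrite /opapply big1 // => y _; rewrite /op0 mul0r. Qed.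

Lemma apply_adjop0 N n (w : vec N n) x : opapply (opadj (@op0 N n)) w x = 0.
Proof. by rewrite /opapply big1 // => y _; rewrite /opadj /op0 conjC0 mul0r. Qed.

Lemma apply_sum N n (I : seq nat) (p q : nat -> vec N n) w x :
  opapply (opsum I (fun a => ketbra (p a) (q a))) w x
  = \sum_(a <- I) p a x * inner (q a) w.
Proof.
rewrite /opapply /opsum /ketbra /inner.
under eq_bigr do rewrite mulr_suml.
rewrite exchange_big /=; apply: eq_bigr => a _.
by rewrite mulr_sumr; apply: eq_bigr => y _; rewrite mulrA.
Qed.

Lemma apply_dsum N n (I J : seq nat) (c : nat -> nat -> algC) (p q : nat -> vec N n) w x :
  opapply (opsum I (fun b => opsum J (fun a => opscale (c b a) (ketbra (p b) (q a))))) w x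
  = \sum_(b <- I) \sum_(a <- J) c b a * p b x * inner (q a) w.
Proof.
rewrite /opapply /opsum /opscale /ketbra /inner.
under eq_bigr do rewrite mulr_suml.
rewrite exchange_big /=; apply: eq_bigr => b _.
under eq_bigr do rewrite mulr_suml.
rewrite exchange_big /=; apply: eq_bigr => a _.
by rewrite mulr_sumr; apply: eq_bigr => y _; rewrite !mulrA.
Qed.

Lemma apply_adjdsum N n (I J : seq nat) (c : nat -> nat -> algC) (p q : nat -> vec N n) w x :
  opapply (opadj (opsum I (fun b => opsum J (fun a => opscale (c b a) (ketbra (p b) (q a)))))) w x
  = \sum_(b <- I) \sum_(a <- J) (c b a)^* * q a x * inner (p b) w.
Proof.
rewrite /opapply /opadj /opsum /opscale /ketbra /inner.
under eq_bigr do rewrite rmorph_sum mulr_suml.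
rewrite exchange_big /=; apply: eq_bigr => b _.
under eq_bigr do rewrite rmorph_sum mulr_suml.
rewrite exchange_big /=; apply: eq_bigr => a _.
rewrite mulr_sumr; apply: eq_bigr => y _.
by rewrite !rmorphM /= conjCK (mulrC (p b y)^*) !mulrA.
Qed.

Definition pt (N : nat) (n : nat -> nat) (k a : nat) : basis N n :=
  odflt (inl true) [pick x : basis N n | e_a k a x == 1].

Lemma nat_bool_eq1 (b : bool) : ((b%:R : algC) == 1) = b.
Proof. by case: b; rewrite pnatr_eq1. Qed.

Lemma e_a_uniq N n k a (y1 y2 : basis N n) :
  e_a k a y1 = 1 -> e_a k a y2 = 1 -> y1 = y2.
Proof.
case: y1 => [s|[k1 a1]] /=; first by move/eqP; rewrite eq_sym oner_eq0.
move/eqP; rewrite nat_bool_eq1 => /andP [/eqP hk1 /eqP ha1].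
case: y2 => [s|[k2 a2]] /=; first by move/eqP; rewrite eq_sym oner_eq0.
move/eqP; rewrite nat_bool_eq1 => /andP [/eqP hk2 /eqP ha2].
have ek : k1 = k2 by apply: val_inj; apply: succn_inj; rewrite hk1 hk2.
subst k2; have -> : a1 = a2 by apply: val_inj; rewrite /= ha1 ha2.
by [].
Qed.

Lemma pt_valid N n k a : (1 <= k <= N)%N -> (a < n k)%N -> e_a k a (pt N n k a) = 1.
Proof.
move=> /andP [k1 kN] ha.
have hk : (k.-1 < N)%N by rewrite prednK.
have ha' : (a < n (k.-1).+1)%N by rewrite prednK.
pose x0 : basis N n := inr (existT (fun i : 'I_N => 'I_(n i.+1)) (Ordinal hk) (Ordinal ha')).
have e0 : e_a k a x0 = 1 by rewrite /= prednK // !eqxx.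
rewrite /pt; case: pickP => [x /eqP //|/(_ x0)]; by rewrite e0 eqxx.
Qed.

Lemma e_a_pt_ind N n k a : (1 <= k <= N)%N -> (a < n k)%N ->
  forall y : basis N n, e_a k a y = (y == pt N n k a)%:R.
Proof.
move=> hk ha y; case: (eqVneq y (pt N n k a)) => [->|ne]; first by rewrite pt_valid.
have : e_a k a y != 1 by apply: contra ne => /eqP h; apply/eqP; exact: e_a_uniq h (pt_valid hk ha).
case: y ne => [s|[k1 a1]] //= _; by case: (_ && _); rewrite ?eqxx.
Qed.

Lemma pt_inr N n k a : (1 <= k <= N)%N -> (a < n k)%N ->
  exists s : {i : 'I_N & 'I_(n i.+1)}, [/\ pt N n k a = inr s, (tag s).+1 = k & nat_of_ord (tagged s) = a].
Proof.
move=> hk ha; have := pt_valid hk ha.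
case: (pt N n k a) => [s|[k1 a1]] /=; first by move/eqP; rewrite eq_sym oner_eq0.
move/eqP; rewrite nat_bool_eq1 => /andP [/eqP hk1 /eqP ha1].
by exists (existT _ k1 a1).
Qed.

Lemma e_a_pt N n k a k' a' : (1 <= k <= N)%N -> (a < n k)%N ->
  e_a k' a' (pt N n k a) = ((k == k') && (a == a'))%:R.
Proof. by move=> hk ha; have [s [-> hs1 hs2]] := pt_inr hk ha; rewrite /= hs2 hs1. Qed.

Lemma e_pm_pt N n k a s : (1 <= k <= N)%N -> (a < n k)%N ->
  e_pm s (pt N n k a) = 0.
Proof. by move=> hk ha; have [s' [-> _ _]] := pt_inr hk ha. Qed.

Lemma pt_cover N n (x : basis N n) :
  (exists s, x = inl s) \/ exists k a, [/\ (1 <= k <= N)%N, (a < n k)%N & x = pt N n k a].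
Proof.
case: x => [s|s]; first by left; exists s.
right; exists (tag s).+1, (val (tagged s)).
have hk : (1 <= (tag s).+1 <= N)%N by rewrite /= ltn_ord.
have ha : (val (tagged s) < n (tag s).+1)%N by exact: ltn_ord.
split => //; apply: e_a_uniq (pt_valid hk ha).
by rewrite /= !eqxx.
Qed.

Lemma e_a_inl N n k a s : e_a (N:=N) (n:=n) k a (inl s) = 0.
Proof. by []. Qed.

Lemma inner_e_a N n k a (w : vec N n) : (1 <= k <= N)%N -> (a < n k)%N ->
  inner (e_a k a) w = w (pt N n k a).
Proof.
move=> hk ha; rewrite /inner (bigD1 (pt N n k a)) //= (e_a_pt_ind hk ha) eqxx conjC1 mul1r.
rewrite big1 ?addr0 // => y /negbTE ne.
by rewrite (e_a_pt_ind hk ha) ne conjC0 mul0r.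
Qed.

Lemma inner_e_pm N n s (w : vec N n) : inner (e_pm s) w = w (inl s).
Proof.
rewrite /inner (bigD1 (inl s)) //= /e_pm eqxx conjC1 mul1r.
by rewrite big1 ?addr0 // => y /negbTE ne; rewrite ne conjC0 mul0r.
Qed.

Lemma sum_iota_pick m j (F : nat -> algC) :
  \sum_(b <- iota 0 m) (j == b)%:R * F b = (j < m)%:R * F j.
Proof.
elim: m => [|m IH]; first by rewrite big_nil mul0r.
rewrite -addn1 iotaD big_cat big_seq1 IH add0n addn1 ltnS.
case: (ltngtP j m) => [h|h|->] /=; rewrite ?eqxx ?mul0r ?mul1r ?addr0 ?add0r ?ltnn //.

Qed.

Lemma eq_big_iota m (F G : nat -> algC) :
  (forall b, (b < m)%N -> F b = G b) ->
  \sum_(b <- iota 0 m) F b = \sum_(b <- iota 0 m) G b.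
Proof.
move=> h; rewrite !big_seq; apply: eq_bigr => b; rewrite mem_iota add0n => /andP [_ hb].
exact: h.
Qed.
Lemma fin_max (I : finType) (P : pred I) (F : I -> algC) i0 :
  P i0 -> (forall i, F i \is Num.real) ->
  exists2 j, P j & forall i, P i -> F i <= F j.
Proof.
move=> Pi0 HF.
case: (@arg_maxP _ _ I i0 P (fun i => in_algR (HF i)) Pi0) => j Pj Hj.
by exists j => // i /Hj.
Qed.

Lemma keyR (t1 t2 g1 g2 : algR) : t1^+2 + t2^+2 = 1 -> g1^+2 + g2^+2 = 1 -> t1 <= g1 -> g1 < 1 ->
  t1 * g1 - t2 * g2 <= t1 -> t1 * g1 + t2 * g2 <= t1 -> False.
Proof. move=> *. nra. Qed.

Lemma keyC (t g : algC) : `|t| = 1 -> `|g| = 1 -> 'Re t <= 'Re g -> 'Re g < 1 ->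
  'Re (t * g) <= 'Re t -> 'Re (t * g^*) <= 'Re t -> False.
Proof.
move=> nt ng h1 h2 h3 h4.
pose t1 := in_algR (Creal_Re t); pose t2 := in_algR (Creal_Im t).
pose g1 := in_algR (Creal_Re g); pose g2 := in_algR (Creal_Im g).
apply: (@keyR t1 t2 g1 g2).
- by apply: val_inj; rewrite /= -normC2_Re_Im nt expr1n.
- by apply: val_inj; rewrite /= -normC2_Re_Im ng expr1n.
- exact: h1.
- exact: h2.
- by move: h3; rewrite ReM.
- by move: h4; rewrite ReM Re_conj Im_conj mulrN opprK.
Qed.

Lemma unitRe1 (g : algC) : `|g| = 1 -> 1 <= 'Re g -> g = 1.
Proof.
move=> ng h.
pose g1 := in_algR (Creal_Re g); pose g2 := in_algR (Creal_Im g).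
have e : g1^+2 + g2^+2 = 1 by apply: val_inj; rewrite /= -normC2_Re_Im ng expr1n.
have h' : 1 <= g1 by exact: h.
have e1 : g1 = 1 by nra.
have e2 : g2 = 0 by nra.
rewrite [g]Crect.
have -> : 'Re g = 1 by have := congr1 val e1.
have -> : 'Im g = 0 by have := congr1 val e2.
by rewrite mulr0 addr0.
Qed.

Lemma N1neq1 : (-1 : algC) != 1.
Proof. by rewrite lt_eqF // (lt_le_trans (ltrN10 _)) // ler01. Qed.

Lemma rootN1_order m : (1 < m)%N -> forall i, ((m.-root (-1 : algC)) ^+ i == 1) = (m.*2 %| i)%N.
Proof.
move=> m1; set M := m.*2.
have M0 : (0 < M)%N by rewrite double_gt0 ltnW.
have M1 : (1 < M)%N by rewrite /M -addnn (leq_trans m1) // leq_addr.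
have [z zP] := C_prim_root_exists M0.
have zM : z ^+ M = 1 := prim_expr_order zP.
have norm1 : forall y : algC, y ^+ M = 1 -> `|y| = 1.
  move=> y hy; have : `|y| ^+ M = 1 by rewrite -normrX hy normr1.
  by move/eqP; rewrite -(prednK M0) geC0_unit_exp ?normr_ge0 // => /eqP.
have [ks ksP ksmax] := @fin_max _ (fun k : 'I_M => val k != 0%N)
   (fun k => 'Re (z ^+ k)) (Ordinal M1) isT (fun _ => Creal_Re _).
set g := z ^+ ks.
have gM : g ^+ M = 1 by rewrite -exprM mulnC exprM zM expr1n.
have maxg : forall y, y ^+ M = 1 -> y != 1 -> 'Re y <= 'Re g.
  move=> y hy hy1; have [i ei] := prim_rootP zP hy; rewrite ei.
  apply: ksmax => /=; apply: contra hy1 => /eqP i0.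
  by rewrite ei i0 expr0.
have g1 : g != 1.
  rewrite /g -(prim_order_dvd zP); apply/negP => /(dvdn_leq _).
  by rewrite lt0n ksP leqNgt ltn_ord => /(_ isT).
have Reg1 : 'Re g < 1.
  rewrite real_ltNge ?real1 ?Creal_Re //; apply/negP => h.
  by case/eqP: g1; exact: unitRe1 (norm1 g gM) h.
have gi : g^* = g ^+ M.-1.
  have g0 : g != 0.
    by apply/eqP => g0; move: gM; rewrite g0 expr0n eqn0Ngt M0 /= => /eqP; rewrite eq_sym oner_eq0.
  have : g^-1 = g^* by rewrite invC_norm (norm1 g gM) expr1n invr1 mul1r.
  move <-; apply: (mulrI (x := g)); first by rewrite unitfE.
  by rewrite mulrV ?unitfE // -exprS prednK.
have zg : [exists j : 'I_M, z == g ^+ j].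
  apply: contraT => /existsPn hn.
  have [j0 _ j0max] := @fin_max _ predT (fun j : 'I_M => 'Re (z * g ^+ j)) (Ordinal M0) isT (fun _ => Creal_Re _).
  set t := z * g ^+ j0.
  have tM : t ^+ M = 1 by rewrite exprMn zM -exprM mulnC exprM gM expr1n mul1r.
  have t1 : t != 1.
    apply/eqP => et; have := hn (Ordinal (ltn_pmod (M - j0) M0)); rewrite /= expr_mod //.
    have -> : z = g ^+ (M - j0).
      have e : g ^+ (M - j0) * g ^+ j0 = 1 by rewrite -exprD subnK ?gM // ltnW.
      by rewrite -[z]mulr1 -e mulrCA -/t et mulr1.
    by rewrite eqxx.
  have h3 : 'Re (t * g) <= 'Re t.
    have := j0max (Ordinal (ltn_pmod j0.+1 M0)) isT; rewrite /= expr_mod //.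
    by rewrite exprSr mulrA => h; exact h.
  have h4 : 'Re (t * g^*) <= 'Re t.
    have := j0max (Ordinal (ltn_pmod (j0 + M.-1) M0)) isT; rewrite /= expr_mod //.
    by rewrite gi exprD mulrA => h; exact h.
  by case: (@keyC t g (norm1 t tM) (norm1 g gM) (maxg t tM t1) Reg1 h3 h4).
have gprim : forall i, (g ^+ i == 1) = (M %| i)%N.
  move=> i; apply/idP/idP.
    case/existsP: zg => j /eqP zj /eqP gi1.
    by rewrite (prim_order_dvd zP) zj -exprM mulnC exprM gi1 expr1n.
  by case/dvdnP => q ->; rewrite mulnC exprM gM expr1n.
have gm : g ^+ m = -1.
  have : (g ^+ m) ^+ 2 == 1 by rewrite -exprM muln2 gM.
  rewrite sqrf_eq1 gprim => /orP[|/eqP //].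
  move/(dvdn_leq (ltnW m1)); rewrite /M -addnn leqNgt => /negP; case.
  by rewrite -addn1 leq_add2l ltnW.
set g' := if 0 <= 'Im g then g else g^*.
have g'm : g' ^+ m = -1.
  by rewrite /g'; case: ifP => // _; rewrite -rmorphXn gm rmorphN1.
have Img' : 0 <= 'Im g'.
  rewrite /g'; case: ifP => // /negbT; rewrite Im_conj oppr_ge0.
  by move=> h; apply: ltW; rewrite real_ltNge ?Creal_Im ?real0.
have Reg' : 'Re g' = 'Re g by rewrite /g'; case: ifP => //; rewrite Re_conj.
set w := m.-root (-1 : algC).
have wm : w ^+ m = -1 := rootCK (ltnW m1) (-1).
have wM : w ^+ M = 1 by rewrite /M -muln2 exprM wm expr2 mulrNN mulr1.
have w1 : w != 1.
  by apply/eqP => w1; move: wm; rewrite w1 expr1n => /eqP; rewrite eq_sym (negbTE N1neq1).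
have Rew : 'Re w = 'Re g'.
  apply: le_anti; rewrite Reg' maxg //= -Reg'.
  exact: rootC_Re_max (ltnW m1) g'm Img'.
have Imw : 0 <= 'Im w := Im_rootC_ge0 _ m1.
have ng' : `|g'| = 1 by rewrite /g'; case: ifP => _; rewrite ?norm_conjC norm1.
have Imeq : 'Im w = 'Im g'.
  apply/eqP; rewrite -(@eqrXn2 _ 2) //.
  have e1 := normC2_Re_Im w; have e2 := normC2_Re_Im g'.
  rewrite (norm1 w wM) ng' Rew in e1 e2.
  by apply/eqP; apply: (addrI ('Re g' ^+ 2)); rewrite -e1 -e2.
have wg : w = g' by rewrite [w]Crect [g']Crect Rew Imeq.
move=> i; rewrite wg /g'; case: ifP => _; first exact: gprim.
by rewrite -rmorphXn fmorph_eq1 gprim.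
Qed.

Lemma zeta_exp1 m j : (0 < m)%N -> (zeta m ^+ j == 1) = (m %| j)%N.
Proof.
move=> m0; rewrite /zeta.
case: (ltngtP 1 m) => [m1| |<-]; last first.
- by rewrite root1C expr2 mulrNN mulr1 expr1n eqxx dvd1n.
- by rewrite ltnS leqn0 (gtn_eqF m0).
by rewrite -exprM rootN1_order // -muln2 mulnC (dvdn_pmul2l (isT : (0 < 2)%N)).
Qed.

Lemma zetaM m : (0 < m)%N -> zeta m ^+ m = 1.
Proof. by move=> m0; apply/eqP; rewrite zeta_exp1. Qed.

Lemma zeta_norm m b : (0 < m)%N -> `|zeta m ^+ b| = 1.
Proof.
move=> m0; have : `|zeta m ^+ b| ^+ m = 1 by rewrite -normrX -exprM mulnC exprM zetaM // expr1n normr1.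
by move/eqP; rewrite -(prednK m0) geC0_unit_exp ?normr_ge0 // => /eqP.
Qed.

Lemma zeta_conj m b : (0 < m)%N -> (b <= m)%N -> (zeta m ^+ b)^* = zeta m ^+ (m - b).
Proof.
move=> m0 bm; set x := zeta m ^+ b.
have x0 : x != 0 by rewrite -normr_eq0 /x zeta_norm // oner_eq0.
apply: (mulIf x0) => /=.
rewrite -normCKC zeta_norm // expr1n /x -exprD subnK // zetaM //.
Qed.

Lemma arith a b m q : (a < m)%N -> (b < m)%N -> a != b -> (a + (m - b) = q * m)%N -> False.
Proof.
move=> am bm /eqP ne; case: q => [|[|q]].
- rewrite mul0n; lia.
- rewrite mul1n; lia.
- rewrite !mulSn; lia.
Qed.

Lemma orth m a b : (a < m)%N -> (b < m)%N ->
  \sum_(j <- iota 0 m) zeta m ^+ (a * j) * (zeta m ^+ (b * j))^* = (a == b)%:R * m%:R.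
Proof.
move=> am bm; have m0 : (0 < m)%N by apply: leq_ltn_trans am.
set x := zeta m ^+ (a + (m - b)).
have e : forall j, zeta m ^+ (a * j) * (zeta m ^+ (b * j))^* = x ^+ j.
  move=> j; rewrite exprM exprM rmorphXn /= (zeta_conj m0 (ltnW bm)).
  by rewrite -exprMn -exprD.
under eq_bigr do rewrite e.
have -> : iota 0 m = index_iota 0 m by rewrite /index_iota subn0.
rewrite big_mkord.
case: (eqVneq a b) => [eab|ne].
  rewrite /x eab ?eqxx (subnKC (ltnW bm)) (zetaM m0) mul1r.
  by under eq_bigr do rewrite expr1n; rewrite sumr_const card_ord.
rewrite mul0r.
have x1 : x != 1.
  rewrite (zeta_exp1 _ m0); apply/negP => /dvdnP [q hq].
  exact: arith am bm ne hq.
have xm : x ^+ m = 1 by rewrite /x -exprM mulnC exprM zetaM // expr1n.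
have : (x - 1) * \sum_(i < m) x ^+ i = 0 by rewrite -subrX1 xm subrr.
by move/eqP; rewrite mulf_eq0 subr_eq0 (negbTE x1) /= => /eqP.
Qed.

Lemma isqrt_conj m : (isqrt m)^* = isqrt m.
Proof. by apply: geC0_conj; rewrite /isqrt invr_ge0 sqrtC_ge0 ler0n. Qed.

Lemma isqrt_neq0 m : (0 < m)%N -> isqrt m != 0.
Proof. by move=> m0; rewrite /isqrt invr_eq0 sqrtC_eq0 pnatr_eq0 -lt0n. Qed.

Lemma isqrt_sq m : (0 < m)%N -> isqrt m * isqrt m * m%:R = 1.
Proof.
move=> m0; rewrite /isqrt -expr2 exprVn sqrtCK mulVf // pnatr_eq0 -lt0n //.
Qed.

Lemma phi0_val N n k (x : basis N n) :
  phi k 0 x = isqrt (n k) * \sum_(b <- iota 0 (n k)) e_a k b x.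
Proof.
rewrite /phi /vscale /vsum /=; congr (_ * _); apply: eq_bigr => b _.
by rewrite muln0 expr0 invr1 mul1r.
Qed.

Lemma phi0_pt N n k k' a' : (1 <= k' <= N)%N -> (a' < n k')%N ->
  phi k 0 (pt N n k' a') = (k' == k)%:R * isqrt (n k).
Proof.
move=> hk ha; rewrite phi0_val.
under eq_bigr do rewrite (e_a_pt _ _ hk ha).
case: (eqVneq k' k) => [<-|ne] /=.
  rewrite ?eqxx /=.
  rewrite (eq_bigr (fun b => (a' == b)%:R * 1)); last by move=> b _; rewrite mulr1.
  by rewrite (sum_iota_pick (n k') a' (fun _ => 1)) ha /= !mulr1 mul1r.
by rewrite big1 ?mulr0 ?mul0r.
Qed.

Lemma phi0_inl N n k s : phi (N:=N) (n:=n) k 0 (inl s) = 0.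
Proof. by rewrite phi0_val big1 ?mulr0. Qed.

Lemma inner_phi0 N n k (w : vec N n) : (1 <= k <= N)%N ->
  inner (phi k 0) w = isqrt (n k) * \sum_(b <- iota 0 (n k)) w (pt N n k b).
Proof.
move=> hk; rewrite /inner.
under eq_bigr do rewrite phi0_val rmorphM /= isqrt_conj rmorph_sum /= -mulrA mulr_suml.
rewrite -mulr_sumr exchange_big /=; congr (_ * _).
apply: eq_big_iota => b hb; rewrite -(inner_e_a w hk hb) /inner.
by [].
Qed.

Lemma Zop_apply N n k (w : vec N n) x :
  opapply (Zop k) w x = isqrt (n k) *
    \sum_(b <- iota 0 (n k.+1)) \sum_(a <- iota 0 (n k))
       zeta (n k) ^+ (b * a) * e_a k.+1 b x * inner (e_a k a) w.
Proof. by rewrite /Zop apply_scale apply_dsum. Qed.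

Lemma Zadj_apply N n k (w : vec N n) x :
  opapply (opadj (Zop k)) w x = isqrt (n k) *
    \sum_(b <- iota 0 (n k.+1)) \sum_(a <- iota 0 (n k))
       (zeta (n k) ^+ (b * a))^* * e_a k a x * inner (e_a k.+1 b) w.
Proof. by rewrite /Zop apply_adjscale apply_adjdsum isqrt_conj. Qed.

Lemma Pk_apply N n k (w : vec N n) x :
  opapply (Pk k) w x = \sum_(a <- iota 0 (n k)) e_a k a x * inner (e_a k a) w.
Proof. by rewrite /Pk apply_sum. Qed.

Lemma npos N (n : nat -> nat)
  (hmono : forall k, (1 <= k < N)%N -> (n k.+1 <= n k)%N)
  (hpos : (1 <= n N)%N) k : (1 <= k <= N)%N -> (0 < n k)%N.
Proof.
move=> /andP [k1 kN].
suff h : forall j, (j <= N - k)%N -> (n N <= n (N - j))%N.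
  by have := h (N - k)%N (leqnn _); rewrite subKn // => /(leq_trans hpos).
elim=> [|j IH] hj; first by rewrite subn0.
have hj' : (j <= N - k)%N by apply: ltnW.
apply: (leq_trans (IH hj')).
have e : (N - j)%N = (N - j.+1).+1 by lia.
rewrite e; apply: hmono; apply/andP; split; lia.
Qed.

Lemma Zop_at N n k b (w : vec N n) : (1 <= k < N)%N -> (b < n k.+1)%N ->
  opapply (Zop k) w (pt N n k.+1 b) =
  isqrt (n k) * \sum_(a <- iota 0 (n k)) zeta (n k) ^+ (b * a) * w (pt N n k a).
Proof.
move=> /andP [k1 kN] hb.
have hk : (1 <= k <= N)%N by rewrite k1 ltnW.
have hk1 : (1 <= k.+1 <= N)%N by rewrite kN.
rewrite Zop_apply; congr (_ * _).
transitivity (\sum_(b' <- iota 0 (n k.+1)) (b == b')%:R *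
   \sum_(a <- iota 0 (n k)) zeta (n k) ^+ (b' * a) * w (pt N n k a)).
  apply: eq_bigr => b' _; rewrite mulr_sumr; apply: eq_big_iota => a ha.
  rewrite (e_a_pt _ _ hk1 hb) eqxx /= (inner_e_a w hk ha).
  by rewrite mulrAC mulrC.
rewrite (sum_iota_pick (n k.+1) b
   (fun b' => \sum_(a <- iota 0 (n k)) zeta (n k) ^+ (b' * a) * w (pt N n k a))).
by rewrite hb /= mul1r.
Qed.

Lemma Zadj_at N n k a0 (w : vec N n) : (1 <= k < N)%N -> (a0 < n k)%N ->
  opapply (opadj (Zop k)) w (pt N n k a0) =
  isqrt (n k) * \sum_(b <- iota 0 (n k.+1)) (zeta (n k) ^+ (b * a0))^* * w (pt N n k.+1 b).
Proof.
move=> /andP [k1 kN] ha0.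
have hk : (1 <= k <= N)%N by rewrite k1 ltnW.
have hk1 : (1 <= k.+1 <= N)%N by rewrite kN.
rewrite Zadj_apply; congr (_ * _); apply: eq_big_iota => b hb.
transitivity (\sum_(a <- iota 0 (n k)) (a0 == a)%:R *
   ((zeta (n k) ^+ (b * a))^* * w (pt N n k.+1 b))).
  apply: eq_bigr => a _.
  rewrite (e_a_pt _ _ hk ha0) eqxx /= (inner_e_a w hk1 hb).
  by rewrite mulrAC mulrC.
rewrite (sum_iota_pick (n k) a0
   (fun a => (zeta (n k) ^+ (b * a))^* * w (pt N n k.+1 b))).
by rewrite ha0 /= mul1r.
Qed.

Definition Cond N (n : nat -> nat) (v : vec N n) : Prop :=
  [/\ v (inl true) = 0, v (inl false) = 0,
      (forall k a, (2 <= k <= N)%N -> (a < n k)%N -> v (pt N n k a) = 0) &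
      (forall b, (b < n 2)%N ->
         \sum_(a <- iota 0 (n 1)) zeta (n 1) ^+ (b * a) * v (pt N n 1 a) = 0)].

Lemma Zv_zero N n (v : vec N n) k x : Cond v -> (1 <= k < N)%N ->
  opapply (Zop k) v x = 0.
Proof.
move=> [_ _ hc hd] /andP [k1 kN].
have hk : (1 <= k <= N)%N by rewrite k1 ltnW.
rewrite Zop_apply; apply/eqP; rewrite mulf_eq0; apply/orP; right; apply/eqP.
rewrite big_seq big1 // => b; rewrite mem_iota add0n => /andP [_ hb].
case: (eqVneq k 1) => [ek|ne].
  subst k.
  rewrite (eq_big_iota (G := fun a => e_a 2 b x * (zeta (n 1) ^+ (b * a) * v (pt N n 1 a)))).
    by rewrite -mulr_sumr hd // mulr0.
  by move=> a ha; rewrite (inner_e_a v hk ha) mulrAC mulrC.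
rewrite big_seq big1 // => a; rewrite mem_iota add0n => /andP [_ ha].
rewrite (inner_e_a v hk ha) hc ?mulr0 //.
by rewrite ltn_neqAle eq_sym ne k1 ltnW.
Qed.

Lemma Zadj_zero N n (v : vec N n) k x : Cond v -> (1 <= k < N)%N ->
  opapply (opadj (Zop k)) v x = 0.
Proof.
move=> [_ _ hc hd] /andP [k1 kN].
have hk1 : (1 <= k.+1 <= N)%N by rewrite kN.
rewrite Zadj_apply; apply/eqP; rewrite mulf_eq0; apply/orP; right; apply/eqP.
rewrite big_seq big1 // => b; rewrite mem_iota add0n => /andP [_ hb].
rewrite big1 // => a _.
by rewrite (inner_e_a v hk1 hb) hc ?mulr0 // ltnS k1 kN.
Qed.

Lemma K_pf N n Gp Gm Gk : @Kraus N n Gp Gm Gk false om_plus =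
  opscale (sqrtC ((n 1)%:R * Gp false)) (ketbra (phi 1 0) (e_pm true)).
Proof. by []. Qed.
Lemma K_pt N n Gp Gm Gk : @Kraus N n Gp Gm Gk true om_plus =
  opscale (sqrtC ((n 1)%:R * Gp true)) (ketbra (e_pm true) (phi 1 0)).
Proof. by []. Qed.
Lemma K_mf N n Gp Gm Gk : @Kraus N n Gp Gm Gk false om_minus =
  opscale (sqrtC (Gm false)) (ketbra (e_pm false) (phi N 0)).
Proof. by []. Qed.
Lemma K_mt N n Gp Gm Gk : @Kraus N n Gp Gm Gk true om_minus = @op0 N n.
Proof. by []. Qed.
Lemma K_kf N n Gp Gm Gk k : @Kraus N n Gp Gm Gk false (om_k k) =
  opscale (sqrtC (Gk false k)) (Zop k).
Proof. by []. Qed.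
Lemma K_kt N n Gp Gm Gk k : @Kraus N n Gp Gm Gk true (om_k k) =
  opscale (sqrtC (Gk true k)) (opadj (Zop k)).
Proof. by []. Qed.

Lemma T2 N n Gp Gm Gk (v : vec N n) : (2 <= N)%N ->
  (forall k, (1 <= k <= N)%N -> (0 < n k)%N) ->
  Cond v -> in_W Gp Gm Gk v.
Proof.
move=> hN np hcond; have [ha hb hc hd] := hcond.
have h1N : (1 <= 1 <= N)%N by rewrite /= (ltnW hN).
have hNN : (1 <= N <= N)%N by rewrite leqnn (ltnW hN).
have h2N : (1 <= 2 <= N)%N by rewrite hN.
have phi1 : inner (phi 1 0) v = 0.
  rewrite (inner_phi0 v h1N); apply/eqP; rewrite mulf_eq0; apply/orP; right; apply/eqP.
  rewrite -[RHS](hd 0%N (np 2 h2N)).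
  by apply: eq_bigr => a _; rewrite mul0n expr0 mul1r.
have phiN : inner (phi N 0) v = 0.
  rewrite (inner_phi0 v hNN) big_seq big1 ?mulr0 // => b.
  rewrite mem_iota add0n => /andP [_ hbN].
  by apply: hc hbN; rewrite hN leqnn.
rewrite /in_W => e w hv; case: w hv => [||k] hv; case: e; split => x.
- by rewrite K_pt apply_scale apply_ketbra phi1 !mulr0.
- by rewrite K_pt apply_adjscale apply_adjketbra inner_e_pm ha !mulr0.
- by rewrite K_pf apply_scale apply_ketbra inner_e_pm ha !mulr0.
- by rewrite K_pf apply_adjscale apply_adjketbra phi1 !mulr0.
- by rewrite K_mt apply_op0.
- by rewrite K_mt apply_adjop0.
- by rewrite K_mf apply_scale apply_ketbra phiN !mulr0.
- by rewrite K_mf apply_adjscale apply_adjketbra inner_e_pm hb !mulr0.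
- by rewrite K_kt apply_scale (Zadj_zero x hcond hv) mulr0.
- by rewrite K_kt apply_adjscale apply_adjadj (Zv_zero x hcond hv) mulr0.
- by rewrite K_kf apply_scale (Zv_zero x hcond hv) mulr0.
- by rewrite K_kf apply_adjscale (Zadj_zero x hcond hv) mulr0.
Qed.

Lemma T4 N n (v : vec N n) : (2 <= N)%N -> Cond v ->
  in_range (opsub (Pk 1) (opcomp (opadj (Zop 1)) (Zop 1))) v.
Proof.
move=> hN hcond; have [ha hb hc hd] := hcond.
have h1N : (1 <= 1 <= N)%N by rewrite /= (ltnW hN).
have h1N' : (1 <= 1 < N)%N by [].
exists v => x.
rewrite apply_sub apply_comp.
have -> : opapply (opadj (Zop 1)) (opapply (Zop 1) v) x = 0.
  by apply: apply_0 => y; apply: Zv_zero hcond h1N'.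
rewrite subr0 Pk_apply.
rewrite (eq_big_iota (G := fun a => e_a 1 a x * v (pt N n 1 a))); last first.
  by move=> a ha0; rewrite (inner_e_a v h1N ha0).
case: (pt_cover x) => [[s ->]|[k [a [hk ha' ->]]]].
  rewrite big1 => [|a _]; last by rewrite e_a_inl mul0r.
  by case: s.
case: (eqVneq k 1) => [ek|ne].
  subst k.
  rewrite (eq_bigr (fun a' => (a == a')%:R * v (pt N n 1 a'))); last first.
    by move=> a' _; rewrite (e_a_pt _ _ hk ha') eqxx.
  by rewrite (sum_iota_pick (n 1) a (fun a' => v (pt N n 1 a'))) ha' /= mul1r.
rewrite big1 => [|a' _]; last by rewrite (e_a_pt _ _ hk ha') (negbTE ne) mul0r.
apply: hc ha'; case/andP: hk => k1 kN; rewrite kN andbT.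
by move/eqP: ne => ne; lia.
Qed.

Lemma T3 N n (v : vec N n) : (2 <= N)%N -> (n 2 <= n 1)%N ->
  in_range (opsub (Pk 1) (opcomp (opadj (Zop 1)) (Zop 1))) v -> Cond v.
Proof.
move=> hN h21 [u hu].
have h1N : (1 <= 1 <= N)%N by rewrite /= (ltnW hN).
have h2N : (1 <= 2 <= N)%N by rewrite hN.
have h1N' : (1 <= 1 < N)%N by [].
have hv : forall x, v x = \sum_(a <- iota 0 (n 1)) e_a 1 a x * u (pt N n 1 a)
   - isqrt (n 1) * \sum_(b <- iota 0 (n 2)) \sum_(a <- iota 0 (n 1))
       (zeta (n 1) ^+ (b * a))^* * e_a 1 a x * opapply (Zop 1) u (pt N n 2 b).
  move=> x; rewrite hu apply_sub apply_comp Pk_apply Zadj_apply.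
  congr (_ - _ * _).
    by apply: eq_big_iota => a ha; rewrite (inner_e_a u h1N ha).
  by apply: eq_big_iota => b hb; apply: eq_bigr => a _; rewrite (inner_e_a _ h2N hb).
have zero_at : forall x, (forall a, e_a 1 a x = 0) -> v x = 0.
  move=> x h; rewrite hv big1 => [|a _]; last by rewrite h mul0r.
  rewrite big1 => [|b _]; first by rewrite mulr0 subr0.
  by rewrite big1 // => a _; rewrite h mulr0 mul0r.
split.
- by apply: zero_at => a; exact: e_a_inl.
- by apply: zero_at => a; exact: e_a_inl.
- move=> k a /andP [k2 kN] ha; apply: zero_at => a'.
  have hk : (1 <= k <= N)%N by rewrite kN (ltnW k2).
  by rewrite (e_a_pt _ _ hk ha) (gtn_eqF k2).
move=> b0 hb0.
have hb0' : (b0 < n 1)%N by apply: leq_trans h21.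
pose S b := \sum_(a <- iota 0 (n 1)) zeta (n 1) ^+ (b * a) * u (pt N n 1 a).
have hvpt : forall a0, (a0 < n 1)%N -> v (pt N n 1 a0) = u (pt N n 1 a0)
   - isqrt (n 1) * isqrt (n 1) * \sum_(b <- iota 0 (n 2)) (zeta (n 1) ^+ (b * a0))^* * S b.
  move=> a0 ha0; rewrite hv; congr (_ - _).
    rewrite (eq_bigr (fun a => (a0 == a)%:R * u (pt N n 1 a))); last first.
      by move=> a _; rewrite (e_a_pt _ _ h1N ha0) eqxx.
    by rewrite (sum_iota_pick (n 1) a0 (fun a => u (pt N n 1 a))) ha0 /= mul1r.
  rewrite -mulrA; congr (_ * _); rewrite mulr_sumr; apply: eq_big_iota => b hb.
  rewrite (Zop_at u h1N' hb).
  rewrite (eq_bigr (fun a => (a0 == a)%:R * ((zeta (n 1) ^+ (b * a))^* * (isqrt (n 1) * S b)))); last first.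
    by move=> a _; rewrite (e_a_pt _ _ h1N ha0) eqxx /= mulrAC mulrC.
  rewrite (sum_iota_pick (n 1) a0 (fun a => (zeta (n 1) ^+ (b * a))^* * (isqrt (n 1) * S b))).
  by rewrite ha0 /= mul1r mulrCA.
rewrite (eq_big_iota (G := fun a0 => zeta (n 1) ^+ (b0 * a0) * u (pt N n 1 a0) -
   isqrt (n 1) * isqrt (n 1) * (zeta (n 1) ^+ (b0 * a0) *
     \sum_(b <- iota 0 (n 2)) (zeta (n 1) ^+ (b * a0))^* * S b))); last first.
  by move=> a0 ha0; rewrite (hvpt a0 ha0) mulrBr mulrCA.
rewrite sumrB -mulr_sumr.
have e2 : \sum_(a0 <- iota 0 (n 1)) zeta (n 1) ^+ (b0 * a0) *
     \sum_(b <- iota 0 (n 2)) (zeta (n 1) ^+ (b * a0))^* * S b = (n 1)%:R * S b0.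
  under eq_bigr do rewrite mulr_sumr.
  rewrite exchange_big /=.
  rewrite (eq_big_iota (G := fun b => (b0 == b)%:R * ((n 1)%:R * S b))); last first.
    move=> b hb; have hb' : (b < n 1)%N by apply: leq_trans h21.
    rewrite mulrA -(orth hb0' hb') mulr_suml.
    by apply: eq_bigr => a0 _; rewrite mulrA.
  by rewrite (sum_iota_pick (n 2) b0 (fun b => (n 1)%:R * S b)) hb0 /= mul1r.
rewrite e2 mulrA.
have n10 : (0 < n 1)%N by apply: leq_ltn_trans hb0'.
by rewrite (isqrt_sq n10) mul1r subrr.
Qed.

Lemma T1 N n Gp Gm Gk (v : vec N n) : (2 <= N)%N ->
  (forall k, (1 <= k < N)%N -> (n k.+1 <= n k)%N) ->
  (forall k, (1 <= k <= N)%N -> (0 < n k)%N) ->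
  (forall e, 0 < Gp e) -> (forall e, 0 < Gm e) ->
  (forall e k, (1 <= k < N)%N -> 0 < Gk e k) ->
  in_W Gp Gm Gk v -> Cond v.
Proof.
move=> hN hmono np hGp hGm hGk hW.
have h1N : (1 <= 1 <= N)%N by rewrite /= (ltnW hN).
have hNN : (1 <= N <= N)%N by rewrite leqnn (ltnW hN).
have h1N' : (1 <= 1 < N)%N by [].
have sq0 : forall g : algC, 0 < g -> sqrtC g != 0.
  by move=> g hg; rewrite sqrtC_eq0 gt_eqF.
have n10 := np 1 h1N.
have isq1 : isqrt (n 1) != 0 := isqrt_neq0 n10.
have cpf : sqrtC ((n 1)%:R * Gp false) != 0.
  by apply: sq0; rewrite mulr_gt0 // ltr0n.
split.
- have := (hW false om_plus isT).1 (pt N n 1 0).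
  rewrite K_pf apply_scale apply_ketbra inner_e_pm (phi0_pt 1 h1N n10) eqxx mul1r.
  by move/eqP; rewrite !mulf_eq0 (negbTE cpf) (negbTE isq1) /= => /eqP.
- have := (hW false om_minus isT).2 (pt N n N 0).
  rewrite K_mf apply_adjscale apply_adjketbra inner_e_pm (phi0_pt N hNN (np N hNN)) eqxx mul1r.
  move/eqP; rewrite !mulf_eq0 conjC_eq0 (negbTE (sq0 _ (hGm false))).
  by rewrite (negbTE (isqrt_neq0 (np N hNN))) /= => /eqP.
- move=> k a /andP [k2 kN] ha0.
  set k' := k.-1.
  have ek : k'.+1 = k by rewrite /k' prednK // ltnW.
  have hk' : (1 <= k' < N)%N by rewrite /k'; lia.
  have hk'N : (1 <= k' <= N)%N by rewrite /k'; lia.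
  have hz : forall x, opapply (opadj (Zop k')) v x = 0.
    move=> x; have := (hW false (om_k k') hk').2 x.
    rewrite K_kf apply_adjscale; move/eqP.
    by rewrite mulf_eq0 conjC_eq0 (negbTE (sq0 _ (hGk false k' hk'))) /= => /eqP.
  have nk' : (n k <= n k')%N by rewrite -ek hmono.
  have hz2 : forall a'', (a'' < n k')%N ->
      \sum_(b <- iota 0 (n k)) (zeta (n k') ^+ (b * a''))^* * v (pt N n k b) = 0.
    move=> a'' ha''; have := hz (pt N n k' a''); rewrite (Zadj_at v hk' ha'') ek.
    by move/eqP; rewrite mulf_eq0 (negbTE (isqrt_neq0 (np k' hk'N))) /= => /eqP.
  have ha0' : (a < n k')%N := leq_trans ha0 nk'.
  have : \sum_(a'' <- iota 0 (n k')) zeta (n k') ^+ (a * a'') *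
      \sum_(b <- iota 0 (n k)) (zeta (n k') ^+ (b * a''))^* * v (pt N n k b) = 0.
    rewrite big_seq big1 // => a''; rewrite mem_iota add0n => /andP [_ h].
    by rewrite (hz2 a'' h) mulr0.
  under eq_bigr do rewrite mulr_sumr.
  rewrite exchange_big /=.
  rewrite (eq_big_iota (G := fun b => (a == b)%:R * ((n k')%:R * v (pt N n k b)))); last first.
    move=> b hb; have hb' : (b < n k')%N := leq_trans hb nk'.
    rewrite mulrA -(orth ha0' hb') mulr_suml.
    by apply: eq_bigr => a'' _; rewrite mulrA.
  rewrite (sum_iota_pick (n k) a (fun b => (n k')%:R * v (pt N n k b))) ha0 /= mul1r.
  move/eqP; rewrite mulf_eq0 pnatr_eq0 (negbTE (lt0n_neq0 (np k' hk'N))) /=.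
  by move/eqP.
- move=> b hb.
  have := (hW false (om_k 1) h1N').1 (pt N n 2 b).
  rewrite K_kf apply_scale (Zop_at v h1N' hb).
  move/eqP; rewrite !mulf_eq0 (negbTE (sq0 _ (hGk false 1 h1N'))) (negbTE isq1) /=.
  by move/eqP.
Qed.

Theorem proposition3p5 (N : nat) (n : nat -> nat)
  (Gp Gm : bool -> algC) (Gk : bool -> nat -> algC)
  (hN : (2 <= N)%N)
  (hmono : forall k, (1 <= k < N)%N -> (n k.+1 <= n k)%N)
  (hpos : (1 <= n N)%N)
  (hGp : forall e, 0 < Gp e) (hGm : forall e, 0 < Gm e)
  (hGk : forall e k, (1 <= k < N)%N -> 0 < Gk e k) :
  forall v : vec N n,
    @in_W N n Gp Gm Gk v <->
    @in_range N n (@opsub N n (@Pk N n 1)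
      (@opcomp N n (@opadj N n (@Zop N n 1)) (@Zop N n 1))) v.
Proof.
move=> v.
have np : forall k, (1 <= k <= N)%N -> (0 < n k)%N := fun k hk => npos hmono hpos hk.
have h21 : (n 2 <= n 1)%N by apply: hmono.
split.
  by move=> hW; apply: T4 hN (T1 hN hmono np hGp hGm hGk hW).
by move=> hr; apply: T2 hN np (T3 hN h21 hr).
Qed.
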